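(* Let $G_{\mathrm{vc}}=(V_{\mathrm{vc}},E_{\mathrm{vc}})$ be a vertex-capacitated graph and $G_{\mathrm{ec}}$ the corresponding directed edge-capacitated graph. Then for any $u,v\in V_{\mathrm{vc}}$, $\mathrm{dist}_{G_{\mathrm{vc}}}(u,v)=\mathrm{dist}_{G_{\mathrm{ec}}}(u_{\mathrm{mid}},v_{\mathrm{mid}})=\mathrm{dist}_{G_{\mathrm{ec}}}(v_{\mathrm{mid}},u_{\mathrm{mid}})$.
   Context: A vertex-capacitated graph is a finite undirected graph with positive lengths $\ell$ and capacities $u$ on vertices and edges; the length of a path is the sum of the lengths of its vertices and edges, and $\mathrm{dist}_{G_{\mathrm{vc}}}$ is the resulting shortest-path distance. The corresponding directed graph $G_{\mathrm{ec}}$: for each $v\in V_{\mathrm{vc}}$, vertices $v_{\mathrm{in}},v_{\mathrm{mid}},v_{\mathrm{out}}$ and directed edges $(v_{\mathrm{in}},v_{\mathrm{mid}}),(v_{\mathrm{mid}},v_{\mathrm{out}}),(v_{\mathrm{in}},v_{\mathrm{out}})$, each of length $\ell(v)$ and capacity $u(v)$; for each $\{u,v\}\in E_{\mathrm{vc}}$, directed edges $(u_{\mathrm{out}},v_{\mathrm{in}})$ and $(v_{\mathrm{out}},u_{\mathrm{in}})$ of length $\ell(\{u,v\})$ and capacity $u(\{u,v\})$. $\mathrm{dist}_{G_{\mathrm{ec}}}$ is directed shortest-path distance (sum of edge lengths). *)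

(* Defs.v *)
From HB Require Import structures.
From mathcomp Require Import all_boot all_order all_algebra.
From mathcomp Require Import all_classical all_reals ereal.
Set Implicit Arguments. Unset Strict Implicit. Unset Printing Implicit Defensive.
Import Order.TTheory GRing.Theory Num.Theory.
Local Open Scope ring_scope.
Local Open Scope classical_set_scope.

(* A finite undirected (simple) vertex-capacitated graph: vertex set V (a finType),
   symmetric irreflexive adjacency, positive lengths and capacities on vertices
   and on edges (edge data given as symmetric functions on pairs of vertices,
   only meaningful on adjacent pairs). *)
Record vcgraph (R : realType) (V : finType) := VCGraph {
  vc_adj : rel V;
  vc_adj_sym : symmetric vc_adj;
  vc_adj_irr : irreflexive vc_adj;
  vc_lv : V -> R;
  vc_le : V -> V -> R;
  vc_uv : V -> R;
  vc_ue : V -> V -> R;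
  vc_le_sym : forall x y, vc_le x y = vc_le y x;
  vc_ue_sym : forall x y, vc_ue x y = vc_ue y x;
  vc_lv_pos : forall x, 0 < vc_lv x;
  vc_uv_pos : forall x, 0 < vc_uv x;
  vc_le_pos : forall x y, vc_adj x y -> 0 < vc_le x y;
  vc_ue_pos : forall x y, vc_adj x y -> 0 < vc_ue x y
}.

Definition vc_walk_len R V (G : vcgraph R V) (x : V) (s : seq V) : R :=
  (\sum_(y <- x :: s) vc_lv G y) + \sum_(e <- zip (x :: s) s) vc_le G e.1 e.2.

Definition dist_vc R V (G : vcgraph R V) (u v : V) : \bar R :=
  if u == v then 0%E else
  ereal_inf [set (vc_walk_len G u s)%:E | s in
               [set s : seq V | path (vc_adj G) u s /\ last u s = v]].

(* Copies of a vertex in G_ec. *)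
Inductive role := r_in | r_mid | r_out.

Definition ec_vertex (V : finType) := (role * V)%type.

Definition ec_arc R V (G : vcgraph R V) (x y : ec_vertex V) : bool :=
  match x, y with
  | (r_in, a), (r_mid, b) => a == b
  | (r_mid, a), (r_out, b) => a == b
  | (r_in, a), (r_out, b) => a == b
  | (r_out, a), (r_in, b) => vc_adj G a b
  | _, _ => false
  end.

(* Lengths of the directed edges of G_ec (meaningful on arcs only). *)
Definition ec_len R V (G : vcgraph R V) (x y : ec_vertex V) : R :=
  match x, y with
  | (r_in, a), (r_mid, _) => vc_lv G a
  | (r_mid, a), (r_out, _) => vc_lv G a
  | (r_in, a), (r_out, _) => vc_lv G a
  | (r_out, a), (r_in, b) => vc_le G a b
  | _, _ => 0
  end.

Definition ec_cap R V (G : vcgraph R V) (x y : ec_vertex V) : R :=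
  match x, y with
  | (r_in, a), (r_mid, _) => vc_uv G a
  | (r_mid, a), (r_out, _) => vc_uv G a
  | (r_in, a), (r_out, _) => vc_uv G a
  | (r_out, a), (r_in, b) => vc_ue G a b
  | _, _ => 0
  end.

Definition ec_walk_len R V (G : vcgraph R V) (x : ec_vertex V) (s : seq (ec_vertex V)) : R :=
  \sum_(e <- zip (x :: s) s) ec_len G e.1 e.2.

Definition is_ec_walk R V (G : vcgraph R V) (x : ec_vertex V) (s : seq (ec_vertex V)) : Prop :=
  let fix ok (a : ec_vertex V) (t : seq (ec_vertex V)) :=
    match t with [::] => True | b :: t' => ec_arc G a b /\ ok b t' end in ok x s.

Definition last_ec V (x : ec_vertex V) (s : seq (ec_vertex V)) : ec_vertex V :=
  foldl (fun _ b => b) x s.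

Definition dist_ec R V (G : vcgraph R V) (x y : ec_vertex V) : \bar R :=
  ereal_inf [set (ec_walk_len G x s)%:E | s in
               [set s | is_ec_walk G x s /\ last_ec x s = y]].

(* Main.v *)
Require Import Defs.
From mathcomp Require Import all_boot all_order all_algebra.
From mathcomp Require Import all_classical all_reals ereal.
From mathcomp Require Import lra.
Import Order.TTheory GRing.Theory Num.Theory.

Section Aux.
Local Open Scope ring_scope.
Variables (R : realType) (V : finType) (G : vcgraph R V).

Lemma vc_nil x : vc_walk_len G x [::] = vc_lv G x.
Proof. by rewrite /vc_walk_len big_seq1 big_nil addr0. Qed.

Lemma vc_cons x y s :
  vc_walk_len G x (y :: s) = vc_lv G x + vc_le G x y + vc_walk_len G y s.
Proof.
rewrite /vc_walk_len /= !big_cons /=.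
set a := \sum_(_ <- _) _; set b := \sum_(_ <- _) _. lra.
Qed.

Lemma ec_nil (x : ec_vertex V) : ec_walk_len G x [::] = 0.
Proof. by rewrite /ec_walk_len big_nil. Qed.

Lemma ec_cons (x y : ec_vertex V) s : ec_walk_len G x (y :: s) = ec_len G x y + ec_walk_len G y s.
Proof. by rewrite /ec_walk_len /= big_cons. Qed.

Lemma is_ec_cons (x y : ec_vertex V) s : is_ec_walk G x (y :: s) = (ec_arc G x y /\ is_ec_walk G y s).
Proof. by []. Qed.

Lemma last_ec_cons (x y : ec_vertex V) s : last_ec x (y :: s) = last_ec y s.
Proof. by []. Qed.

Lemma ec_nonneg t p : is_ec_walk G p t -> 0 <= ec_walk_len G p t.
Proof.
elim: t p => [|y t IH] p; first by rewrite ec_nil.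
rewrite is_ec_cons ec_cons => -[arc w]; apply: addr_ge0 (IH _ w); clear w IH.
move: arc; case: p => [[] a]; case: y => [[] b] //= H; apply: ltW;
  by [apply: vc_lv_pos | apply: vc_le_pos].
Qed.

Lemma ec_to_vc v t p : is_ec_walk G p t -> last_ec p t = (r_mid, v) ->
  exists s, [/\ path (vc_adj G) p.2 s, last p.2 s = v &
   vc_walk_len G p.2 s <= (if p.1 is r_in then 0 else vc_lv G p.2) + ec_walk_len G p t].
Proof.
elim: t p => [|y t IH] [r a].
  move=> _ [-> ->] /=; exists [::]; split => //.
  by rewrite vc_nil ec_nil addr0.
rewrite is_ec_cons ec_cons last_ec_cons => -[arc w] hl.
have [s [ps ls le]] := IH y w hl.
have lva := vc_lv_pos G a.
clear w hl IH; move: arc ps ls le; case: r; case: y => [[] b] //=.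
- by move=> /eqP <- ps ls le; exists s; split => //; lra.
- by move=> /eqP <- ps ls le; exists s; split => //; lra.
- by move=> /eqP <- ps ls le; exists s; split => //; lra.
- move=> adj ps ls le; exists (b :: s); split => //=; first by rewrite adj.
  rewrite vc_cons; lra.
Qed.

Fixpoint tr (s : seq V) : seq (ec_vertex V) :=
  match s with
  | [::] => [::]
  | y :: s' => (r_in, y) :: (if s' is [::] then [:: (r_mid, y)] else (r_out, y) :: tr s')
  end.

Lemma vc_to_ec s x : s != [::] -> path (vc_adj G) x s ->
  [/\ is_ec_walk G (r_out, x) (tr s), last_ec (r_out, x) (tr s) = (r_mid, last x s) &
      vc_lv G x + ec_walk_len G (r_out, x) (tr s) = vc_walk_len G x s].
Proof.
elim: s x => [|y s IH] x // _ /= /andP[axy ps].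
case: s IH ps => [|z s] IH ps.
  split => //; first by rewrite !is_ec_cons /= axy eqxx.
  rewrite !ec_cons ec_nil vc_cons vc_nil /=; lra.
have [w l e] := IH y isT ps.
split.
- by rewrite !is_ec_cons /= axy eqxx.
- by rewrite !last_ec_cons -l.
- rewrite (ec_cons (r_out,x)) (ec_cons (r_in,y)) vc_cons -e /=.
  lra.
Qed.

Lemma zip_cons_belast (T : Type) (x : T) s : zip (x :: s) s = zip (belast x s) s.
Proof. by elim: s x => [|y s IH] x //=; rewrite IH. Qed.

Lemma sum_zip_swap (T : Type) (F : T -> T -> R) (s t : seq T) :
  \sum_(e <- zip s t) F e.1 e.2 = \sum_(e <- zip t s) F e.2 e.1.
Proof.
elim: s t => [|x s IH] [|y t] //=; rewrite ?big_nil // !big_cons /= IH //.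
Qed.

Lemma rev_walk x s : path (vc_adj G) x s ->
  [/\ path (vc_adj G) (last x s) (rev (belast x s)),
      last (last x s) (rev (belast x s)) = x &
      vc_walk_len G (last x s) (rev (belast x s)) = vc_walk_len G x s].
Proof.
move=> ps.
set L := last x s; set B := belast x s.
have key : L :: rev B = rcons (rev s) x by rewrite -rev_rcons -lastI rev_cons.
split.
- rewrite rev_path; rewrite (@eq_path _ _ (vc_adj G)) // => a b /=; exact: vc_adj_sym.
- by have := congr1 (last x) key; rewrite last_rcons.
- have hb : belast L (rev B) = rev s.
    have := lastI L (rev B); rewrite key => /esym /rcons_inj [] //.
  rewrite /vc_walk_len zip_cons_belast hb key -rev_cons big_rev.
  rewrite -rev_zip ?size_rev ?size_belast // big_rev (@sum_zip_swap _ (vc_le G) s B).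
  rewrite zip_cons_belast -/B; congr (_ + _); apply: eq_bigr => e _.
  exact: vc_le_sym.
Qed.

Lemma inf_le_inf (A B : set (\bar R)) :
  (forall a, A a -> exists2 b, B b & (b <= a)%E) -> (ereal_inf B <= ereal_inf A)%E.
Proof.
move=> H; apply: le_ereal_inf_tmp => a Aa; have [b Bb ba] := H a Aa.
exact: ereal_inf_le (ex_intro2 _ _ b Bb ba).
Qed.

Lemma vc_sym_le u v : u != v ->
  (ereal_inf [set (vc_walk_len G v s)%:E | s in
               [set s : seq V | path (vc_adj G) v s /\ last v s = u]] <=
   ereal_inf [set (vc_walk_len G u s)%:E | s in
               [set s : seq V | path (vc_adj G) u s /\ last u s = v]])%E.
Proof.
move=> neq; apply: inf_le_inf => _ [s [ps ls] <-].
have [p1 l1 e1] := @rev_walk u s ps.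
exists (vc_walk_len G v (rev (belast u s)))%:E; last by rewrite -ls e1.
by exists (rev (belast u s)) => //; rewrite -ls.
Qed.

Lemma key u v : u != v -> dist_vc G u v = dist_ec G (r_mid, u) (r_mid, v).
Proof.
move=> neq; rewrite /dist_vc (negbTE neq) /dist_ec.
apply/eqP; rewrite eq_le; apply/andP; split.
- apply: inf_le_inf => _ [t [w lt] <-].
  case: t w lt => [|y t] w lt.
    by move: lt => [] /eqP; rewrite (negbTE neq).
  move: w; rewrite is_ec_cons => -[arc w'].
  have ey : y = (r_out, u) by clear lt w'; move: arc; case: y => [[] b] //= /eqP <-.
  subst y; rewrite last_ec_cons in lt.
  have [s [ps ls le]] := @ec_to_vc v t (r_out, u) w' lt.
  exists (vc_walk_len G u s)%:E; first by exists s.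
  by rewrite lee_fin ec_cons.
- apply: inf_le_inf => _ [s [ps ls] <-].
  have sn : s != [::] by case: s ps ls => //= _ e; rewrite e eqxx in neq.
  have [w l e] := @vc_to_ec s u sn ps.
  exists (ec_walk_len G (r_mid, u) ((r_out, u) :: tr s))%:E.
    exists ((r_out, u) :: tr s) => //; split.
      by rewrite is_ec_cons /= eqxx.
    by rewrite last_ec_cons l ls.
  by rewrite lee_fin ec_cons /= e.
Qed.

Lemma ec_refl u : dist_ec G (r_mid, u) (r_mid, u) = 0%E.
Proof.
apply/eqP; rewrite eq_le; apply/andP; split.
  apply: ereal_inf_le; exists 0%E => //; exists [::] => //.
  by rewrite ec_nil.
apply: le_ereal_inf_tmp => _ [t [w _] <-]; rewrite lee_fin; exact: ec_nonneg.
Qed.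

End Aux.

Theorem lemma4p6 (R : realType) (V : finType) (G : vcgraph R V) (u v : V) :
  dist_vc G u v = dist_ec G (r_mid, u) (r_mid, v) /\
  dist_ec G (r_mid, u) (r_mid, v) = dist_ec G (r_mid, v) (r_mid, u).
Proof.
have [<-|neq] := eqVneq u v.
  by rewrite /dist_vc eqxx ec_refl.
have neq' : v != u by rewrite eq_sym.
split; first exact: key.
rewrite -!key //; rewrite /dist_vc (negbTE neq) (negbTE neq').
by apply/eqP; rewrite eq_le !vc_sym_le.
Qed.
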